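(* Let $p$ be a prime number, let $G\simeq C_2\oplus C_{2p}$, and let $f$ be an automorphism of $\mathcal{P}_{0}(G)$ with trivial pullback. Then $f$ is the identity.
   Context: For an additively written finite abelian group $G$, $\mathcal{P}_{0}(G)$ is the monoid of all subsets of $G$ containing $0$, with setwise addition and identity $\{0\}$. An automorphism $f$ of $\mathcal{P}_0(G)$ has trivial pullback if $f(\{0,a\})=\{0,a\}$ for all $a\in G$. $C_n$ denotes the cyclic group of order $n$. *)

(* Defs.v *)
From HB Require Import structures.
From mathcomp Require Import all_boot all_order all_algebra.
Set Implicit Arguments. Unset Strict Implicit. Unset Printing Implicit Defensive.
Import GRing.Theory.
Local Open Scope ring_scope.

Definition sumset (G : finZmodType) (A B : {set G}) : {set G} :=
  [set a + b | a in A, b in B].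

Definition P0 (G : finZmodType) := {A : {set G} | 0 \in A}.

Lemma sumset_P0 (G : finZmodType) (A B : P0 G) : 0 \in sumset (val A) (val B).
Proof.
apply/imset2P; exists 0 0; rewrite ?addr0 //; [exact: (valP A)|exact: (valP B)].
Qed.

Definition P0add (G : finZmodType) (A B : P0 G) : P0 G :=
  exist _ (sumset (val A) (val B)) (sumset_P0 A B).

Definition P0one (G : finZmodType) : P0 G := exist _ [set 0] (set11 0).

Definition P0pair (G : finZmodType) (a : G) : P0 G :=
  exist _ [set 0; a] (setU11 0 [set a]).

Definition P0_automorphism (G : finZmodType) (f : P0 G -> P0 G) : Prop :=
  [/\ bijective f,
      forall A B, f (P0add A B) = P0add (f A) (f B)
    & f (P0one G) = P0one G].

Definition trivial_pullback (G : finZmodType) (f : P0 G -> P0 G) : Prop :=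
  forall a : G, f (P0pair a) = P0pair a.

Definition iso_C2_Cn (G : finZmodType) (n : nat) : Prop :=
  exists phi : 'Z_2 * 'Z_n -> G, bijective phi /\ {morph phi : x y / x + y}.

(* Main.v *)
Require Import Defs.
From mathcomp Require Import all_boot all_order all_algebra.
Set Implicit Arguments. Unset Strict Implicit. Unset Printing Implicit Defensive.
Import GRing.Theory.
Local Open Scope ring_scope.

Lemma mem_sum_pair (G : finZmodType) (S : {set G}) (x z : G) :
  (z \in sumset S [set 0; x]) = (z \in S) || (z - x \in S).
Proof.
apply/imset2P/orP.
- case=> a b aS; rewrite !inE => /orP[] /eqP -> ->; first by rewrite addr0; left.
  by right; rewrite addrK.
- case=> H; first by exists z 0; rewrite ?inE ?eqxx ?addr0.
  by exists (z - x) x; rewrite ?inE ?eqxx ?orbT // subrK.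
Qed.

Definition Gset (G : finZmodType) : P0 G := exist _ [set: G] (in_setT 0).

Lemma sumsetT (G : finZmodType) (S : {set G}) : 0 \in S -> sumset S [set: G] = [set: G].
Proof.
move=> S0; apply/setP=> z; rewrite inE; apply/imset2P; exists 0 z; rewrite ?inE ?add0r //.
Qed.

Definition addp (G : finZmodType) (A : P0 G) (x : G) := P0add A (P0pair x).

Definition good (G : finZmodType) (f : P0 G -> P0 G) :=
  [/\ injective f, forall A x, f (addp A x) = addp (f A) x
    & f (Gset G) = Gset G].

Lemma good_of (G : finZmodType) (f : P0 G -> P0 G) :
  P0_automorphism f -> trivial_pullback f -> good f.
Proof.
case=> [[g fg gf] hom _] tp; split.
- exact: can_inj fg.
- by move=> A x; rewrite hom tp.
- have E : forall X : P0 G, P0add X (Gset G) = Gset G.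
    by move=> X; apply: val_inj; rewrite /= sumsetT //; exact: valP X.
  have E' : forall X : P0 G, P0add (Gset G) X = Gset G.
    move=> X; apply: val_inj; apply/setP=> z; rewrite /= inE; apply/imset2P.
    by exists z 0; rewrite ?inE ?addr0 //; exact: valP X.
  transitivity (P0add (f (Gset G)) (f (g (Gset G)))); last by rewrite gf E.
  by rewrite -hom E'.
Qed.

Lemma P0_ext (G : finZmodType) (A B : P0 G) : val A =i val B -> A = B.
Proof. by move=> H; apply: val_inj; apply/setP. Qed.


Lemma mem_addp (G : finZmodType) (A : P0 G) (x z : G) :
  (z \in val (addp A x)) = (z \in val A) || (z - x \in val A).
Proof. exact: mem_sum_pair. Qed.

Definition stabb (G : finZmodType) (A : P0 G) (x : G) :=
  [forall z, (z - x \in val A) ==> (z \in val A)].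

Lemma stabP (G : finZmodType) (A : P0 G) (x : G) :
  reflect (forall z, z - x \in val A -> z \in val A) (stabb A x).
Proof.
apply: (iffP forallP) => H z; first by move/(implyP (H z)).
by apply/implyP; apply: H.
Qed.

Lemma stab_addp (G : finZmodType) (A : P0 G) (x : G) :
  stabb A x = (addp A x == A).
Proof.
apply/stabP/eqP => [H|E z].
- apply: P0_ext => z; rewrite mem_addp.
  by apply/idP/idP => [/orP[//|/H]|->].
- by move=> zx; rewrite -E mem_addp zx orbT.
Qed.

Lemma stab_f (G : finZmodType) (f : P0 G -> P0 G) (A : P0 G) (x : G) :
  good f -> stabb (f A) x = stabb A x.
Proof.
case=> inj hom _; rewrite !stab_addp.
apply/eqP/eqP => [E|E]; last by rewrite -hom E.
by apply: inj; rewrite hom.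
Qed.

Lemma stabN (G : finZmodType) (A : P0 G) (x : G) : stabb A x -> stabb A (- x).
Proof.
move/stabP=> H; apply/stabP => z; rewrite opprK => zA.
apply/negPn/negP => nz.
pose C := ~: val A.
have sub : [set y - x | y in C] \subset C.
  apply/subsetP => y /imsetP [w wC ->]; rewrite inE; apply/negP => /H.
  by move: wC; rewrite inE => /negP.
have : [set y - x | y in C] == C.
  rewrite eqEcard sub card_imset ?leqnn // => a b Eab; by rewrite -(subrK x a) Eab subrK.
move/eqP => E.
have : z \in C by rewrite inE.
rewrite -E => /imsetP [w wC zw].
by move: wC zA; rewrite inE zw subrK => /negP.
Qed.

Lemma stabD (G : finZmodType) (A : P0 G) (x y : G) :
  stabb A x -> stabb A y -> stabb A (x + y).
Proof.
move=> /stabP Hx /stabP Hy; apply/stabP => z zA; apply: Hx; apply: Hy.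
by rewrite -addrA -opprD.
Qed.

Lemma stabB (G : finZmodType) (A : P0 G) (x y : G) :
  stabb A x -> stabb A y -> stabb A (x - y).
Proof. by move=> hx hy; apply: stabD => //; apply: stabN. Qed.

Lemma stab_notin (G : finZmodType) (A : P0 G) (x z : G) :
  stabb A x -> z \notin val A -> z - x \notin val A.
Proof. by move/stabP => H zA; apply/negP => /H; apply/negP. Qed.

Lemma full_f (G : finZmodType) (f : P0 G -> P0 G) (A : P0 G) (x : G) :
  good f -> (forall z, z \in val (addp A x)) -> forall z, z \in val (addp (f A) x).
Proof.
case=> inj hom fG H z; rewrite -hom.
have -> : addp A x = Gset G by apply: P0_ext => w; rewrite H inE.
by rewrite fG inE.
Qed.

Lemma main_nc (G : finZmodType) (f : P0 G -> P0 G) (A : P0 G) :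
  good f -> (exists c, c \notin val A) ->
  (forall c, c \notin val A -> exists2 c', c' \notin val A & ~~ stabb A (c - c')) ->
  (forall x, ~~ stabb A x -> f (addp A x) = addp A x) -> f A = A.
Proof.
move=> gf [c0 c0A] Hnc IH; have [inj hom fG] := gf.
have step1 : forall c, c \notin val A -> c \notin val (f A).
  move=> c cA; have [c' c'A ns] := Hnc c cA.
  have E := IH _ ns; rewrite hom in E.
  have : c \notin val (addp A (c - c')) by rewrite mem_addp opprB addrC subrK negb_or cA.
  by rewrite -E mem_addp negb_or => /andP[].
have step2 : forall d, d \notin val (f A) -> d \notin val A.
  move=> d dfA; apply/negP => dA.
  have ns : ~~ stabb A (d - c0).
    apply/negP => /stabN; rewrite opprB => /stabP /(_ c0).
    by rewrite opprB addrC subrK => /(_ dA); apply/negP.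
  have E := IH _ ns; rewrite hom in E.
  have : d \in val (addp A (d - c0)) by rewrite mem_addp dA.
  by rewrite -E mem_addp opprB addrC subrK (negbTE dfA) (negbTE (step1 _ c0A)).
apply: P0_ext => z; apply/idP/idP => zin.
- by apply/negPn/negP => /step1; rewrite zin.
- by apply/negPn/negP => /step2; rewrite zin.
Qed.

Lemma remP0_proof (G : finZmodType) (S : {set G}) : (0 : G) \in S :|: [set 0].
Proof. by rewrite in_setU set11 orbT. Qed.

Definition remP0 (G : finZmodType) (A : P0 G) (e : G) : P0 G :=
  exist _ (val A :\ e :|: [set 0]) (remP0_proof _).

Lemma mem_rem (G : finZmodType) (A : P0 G) (e z : G) : e != 0 ->
  (z \in val (remP0 A e)) = (z != e) && (z \in val A).
Proof.
move=> e0; rewrite /= in_setU in_setD1 in_set1.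
case: (eqVneq z 0) => [->|nz]; last by rewrite orbF andbC.
by rewrite orbT eq_sym e0 (valP A).
Qed.

Definition cosetb (G : finZmodType) (A : P0 G) :=
  [forall c, forall c', (c \notin val A) ==> (c' \notin val A) ==> stabb A (c - c')].

Lemma cosetP (G : finZmodType) (A : P0 G) c c' :
  cosetb A -> c \notin val A -> c' \notin val A -> stabb A (c - c').
Proof. by move=> /forallP /(_ c) /forallP /(_ c') /implyP H /H /implyP. Qed.

Lemma coset_case (G : finZmodType) (f : P0 G -> P0 G) (A : P0 G) (e c1 c2 : G) :
  good f -> cosetb A -> c1 \notin val A -> c2 \notin val A -> c1 != c2 ->
  e \in val A -> e != 0 ->
  (forall c, c \notin val A ->
     f (addp (remP0 A e) (c - e)) = addp (remP0 A e) (c - e)) -> f A = A.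
Proof.
move=> gf cos c1A c2A c12 eA e0 IH; have [inj hom fG] := gf.
set K := remP0 A e.
have A0 : forall c, c \notin val A -> c != 0.
  by move=> c; apply: contra => /eqP ->; exact: (valP A).
have sa : forall c, c \notin val A -> c \notin val (f K).
  move=> c cA; have E := IH _ cA; rewrite hom in E.
  have : c \notin val (addp K (c - e)).
    by rewrite mem_addp !mem_rem // opprB addrC subrK eqxx (negbTE cA) andbF.
  by rewrite -E mem_addp negb_or => /andP[].
set x := c1 - c2.
have sx : stabb A x by apply: cosetP.
have x0 : x != 0 by rewrite subr_eq0.
have EK : addp K x = A.
  apply: P0_ext => z; rewrite mem_addp !mem_rem //.
  apply/idP/idP.
  - case/orP => /andP [_ //]; exact: (stabP _ _ sx).
  - move=> zA; case: (eqVneq z e) => [ze|zne]; last by apply/orP; left; apply/andP.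
    rewrite ze /= subr_eq -{1}(addr0 e) (inj_eq (addrI e)) eq_sym x0 /=.
    by apply: (stabP _ _ (stabN sx)); rewrite opprK subrK -ze.
have fA : f A = addp (f K) x by rewrite -EK hom.
have sc : forall c, c \notin val A -> c \notin val (f A).
  move=> c cA; rewrite fA mem_addp negb_or sa //=.
  by apply: sa; apply: stab_notin.
have sd : forall d, d \notin val (f A) -> d \notin val A.
  move=> d dfA; apply/negP => dA.
  have : [exists z, z \notin val (addp A (c1 - d))].
    rewrite -[[exists _, _]]negbK; apply/negP => /existsPn H.
    have := full_f gf (fun z => negbNE (H z)) c1.
    by rewrite mem_addp opprB addrC subrK (negbTE dfA) (negbTE (sc _ c1A)).
  case/existsP=> z; rewrite mem_addp negb_or => /andP [zA zyA].
  have := cosetP cos zA zyA; rewrite opprB addrC subrK => /stabP /(_ c1).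
  by rewrite opprB addrC subrK => /(_ dA); apply/negP.
apply: P0_ext => z; apply/idP/idP => zin.
- by apply/negPn/negP => /sc; rewrite zin.
- by apply/negPn/negP => /sd; rewrite zin.
Qed.

Lemma notfull (G : finZmodType) (f : P0 G -> P0 G) (A : P0 G) (x z : G) :
  good f -> z \notin val (addp (f A) x) -> exists w, w \notin val (addp A x).
Proof.
move=> gf zn.
have : [exists w, w \notin val (addp A x)].
  rewrite -[[exists _, _]]negbK; apply/negP => /existsPn H.
  by have := full_f gf (fun w => negbNE (H w)) z; rewrite (negbTE zn).
by case/existsP => w; exists w.
Qed.

Definition cs (G : finZmodType) (g : G) := remP0 (Gset G) g.

Lemma mem_cs (G : finZmodType) (g z : G) : g != 0 -> (z \in val (cs g)) = (z != g).
Proof. by move=> g0; rewrite mem_rem // inE andbT. Qed.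

Lemma cs_struct (G : finZmodType) (f : P0 G -> P0 G) (g : G) :
  good f -> g != 0 -> exists2 s, s != 0 & forall z, (z \in val (f (cs g))) = (z != s).
Proof.
move=> gf g0; have [inj hom fG] := gf.
have : [exists s, s \notin val (f (cs g))].
  rewrite -[[exists _, _]]negbK; apply/negP => /existsPn H.
  have E : f (cs g) = f (Gset G) by rewrite fG; apply: P0_ext => w; rewrite inE; exact: negbNE (H w).
  by have := inj _ _ E => /(congr1 (fun X : P0 G => g \in val X)); rewrite mem_cs // eqxx inE.
case/existsP => s sn; exists s.
  by apply: contra sn => /eqP ->; exact: (valP (f (cs g))).
move=> z; apply/idP/idP => [zin|zs].
  by apply: contra sn => /eqP <-.
apply/negPn/negP => zn.
have : s \notin val (addp (f (cs g)) (s - z)).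
  by rewrite mem_addp opprB addrC subrK negb_or sn.
case/(notfull gf) => w; rewrite mem_addp !mem_cs // negb_or !negbK => /andP [/eqP wg /eqP wg'].
by move: wg'; rewrite wg -{2}(subr0 g) => /addrI /eqP; rewrite eqr_opp subr_eq0 eq_sym (negbTE zs).
Qed.

Lemma H2 (G : finZmodType) (g e : G) : (e - (g - e) == g) = ((g - e) *+ 2 == 0).
Proof.
rewrite -subr_eq0 mulr2n -oppr_eq0 opprD !opprB.
by rewrite opprK addrAC addrA.
Qed.

Lemma H3 (G : finZmodType) (g e : G) : (g + (g - e) == e) = ((g - e) *+ 2 == 0).
Proof. by rewrite -subr_eq0 mulr2n addrAC. Qed.

Lemma cs_link (G : finZmodType) (f : P0 G -> P0 G) (g e sg se : G) :
  good f -> g != 0 -> e != 0 -> (g - e) *+ 2 != 0 ->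
  (forall z, (z \in val (f (cs g))) = (z != sg)) ->
  (forall z, (z \in val (f (cs e))) = (z != se)) -> sg - g = se - e.
Proof.
move=> gf g0 e0 d2 Sg Se; have [inj hom fG] := gf.
have ge : g != e by apply: contra d2 => /eqP ->; rewrite subrr mul0rn.
set K := remP0 (cs g) e; set x := g - e.
have mK : forall z, (z \in val K) = (z != e) && (z != g).
  by move=> z; rewrite mem_rem // mem_cs.
have E1 : addp K x = cs g.
  apply: P0_ext => z; rewrite mem_addp !mK mem_cs //.
  case: (eqVneq z g) => [->|zg].
    by rewrite /x opprB addrC subrK eqxx /= andbF.
  case: (eqVneq z e) => [->|ze] //=.
  rewrite /x subr_eq -{1}(addr0 e) (inj_eq (addrI e)) eq_sym subr_eq0 ge /=.
  by rewrite H2.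
have E2 : addp K (- x) = cs e.
  apply: P0_ext => z; rewrite mem_addp !mK mem_cs // opprK.
  case: (eqVneq z e) => [->|ze].
    by rewrite /x addrC subrK eqxx /= andbF.
  case: (eqVneq z g) => [->|zg] //=.
  by rewrite /x H3 (negbTE d2) /= -{3}(addr0 g) (inj_eq (addrI g)) subr_eq0 ge.
have : se \notin val (f (cs e)) by rewrite Se eqxx.
rewrite -E2 hom mem_addp opprK negb_or => /andP [n1 n2].
have : se + x \notin val (addp (f K) x) by rewrite mem_addp addrK negb_or n1 n2.
rewrite -hom E1 Sg negbK => /eqP <-.
by rewrite /x addrA (addrAC se) addrK.
Qed.

Definition two_w (G : finZmodType) (w1 w2 : G) :=
  [/\ w1 != w2, w1 *+ 2 != 0 & w2 *+ 2 != 0].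

Lemma cs_link2 (G : finZmodType) (f : P0 G -> P0 G) (w1 w2 a b sa sb : G) :
  good f -> two_w w1 w2 -> a != 0 -> b != 0 ->
  (forall z, (z \in val (f (cs a))) = (z != sa)) ->
  (forall z, (z \in val (f (cs b))) = (z != sb)) -> sa - a = sb - b.
Proof.
move=> gf [w12 w10 w20] a0 b0 Sa Sb.
case: (eqVneq ((a - b) *+ 2) 0) => [d0|d]; last exact: cs_link Sa Sb.
have [w [w0 wa]] : exists w : G, w *+ 2 != 0 /\ w + a != 0.
  case: (eqVneq (w1 + a) 0) => [e1|]; last by exists w1.
  exists w2; split => //; apply: contra w12 => /eqP e2.
  by apply/eqP; apply: (addIr a); rewrite e1 e2.
have [sz _ Sz] := cs_struct gf wa.
have za : (w + a - a) *+ 2 != 0 by rewrite addrK.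
have zb : (w + a - b) *+ 2 != 0 by rewrite -addrA mulrnDl d0 addr0.
by rewrite -(cs_link gf wa a0 za Sz Sa) (cs_link gf wa b0 zb Sz Sb).
Qed.

Lemma cs_fixed (G : finZmodType) (f : P0 G -> P0 G) (w1 w2 g : G) :
  good f -> two_w w1 w2 -> g != 0 -> f (cs g) = cs g.
Proof.
move=> gf tw g0.
have [sg _ Sg] := cs_struct gf g0.
have t0 : sg - g == 0.
  apply/negPn/negP => t0.
  have h0 : - (sg - g) != 0 by rewrite oppr_eq0.
  have [sh sh0 Sh] := cs_struct gf h0.
  have := cs_link2 gf tw h0 g0 Sh Sg.
  by move/(congr1 (fun y => y + - (sg - g))); rewrite subrK subrr => E; move: sh0; rewrite E eqxx.
apply: P0_ext => z; rewrite Sg mem_cs //.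
by move: t0; rewrite subr_eq0 => /eqP ->.
Qed.

Lemma pick_w (G : finZmodType) (w1 w2 a : G) :
  two_w w1 w2 -> exists w : G, w *+ 2 != 0 /\ w + a != 0.
Proof.
case=> w12 w10 w20.
case: (eqVneq (w1 + a) 0) => [e1|]; last by exists w1.
exists w2; split => //; apply: contra w12 => /eqP e2.
by apply/eqP; apply: (addIr a); rewrite e1 e2.
Qed.

Lemma small (G : finZmodType) (f : P0 G -> P0 G) (w1 w2 : G) (X : P0 G) :
  good f -> two_w w1 w2 -> (#|~: val X| <= 1)%N -> f X = X.
Proof.
move=> gf tw; have [inj hom fG] := gf.
rewrite leq_eqVlt ltnS leqn0; case/orP => [/cards1P [g Eg]| /eqP/cards0_eq E].
- have g0 : g != 0.
    apply/negP => /eqP g0; have : g \in ~: val X by rewrite Eg set11.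
    by rewrite inE g0 (valP X).
  have -> : X = cs g.
    apply: P0_ext => z; rewrite mem_cs // -[z \in val X]negbK -in_setC Eg in_set1.
    by [].
  exact: cs_fixed gf tw g0.
- have -> : X = Gset G.
    apply: P0_ext => z; rewrite inE -[z \in val X]negbK -in_setC E in_set0.
    by [].
  exact: fG.
Qed.

Lemma compl_lt (G : finZmodType) (A : P0 G) (x : G) :
  ~~ stabb A x -> (#|~: val (addp A x)| < #|~: val A|)%N.
Proof.
move/forallPn => [z]; rewrite negb_imply => /andP [zx zA].
apply: proper_card; apply/properP; split.
  by apply/subsetP => y; rewrite !inE mem_addp negb_or => /andP[].
by exists z; rewrite !inE ?zA // mem_addp zx orbT.
Qed.

Lemma two_elems (G : finType) (S : {set G}) (a b y : G) :
  #|S| = 2%N -> a \in S -> b \in S -> a != b -> y \in S -> (y == a) || (y == b).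
Proof.
move=> cS aS bS ab yS.
have : [set a; b] == S.
  rewrite eqEcard cS cards2 ab leqnn andbT.
  by apply/subsetP => z; rewrite in_set2 => /orP [] /eqP ->.
by move/eqP => E; move: yS; rewrite -E in_set2.
Qed.

Lemma two_nc (G : finZmodType) (f : P0 G -> P0 G) (w1 w2 : G) (X : P0 G) :
  good f -> two_w w1 w2 -> (#|~: val X| <= 2)%N ->
  (forall a b, a \notin val X -> b \notin val X -> a != b -> (a - b) *+ 2 != 0) ->
  f X = X.
Proof.
move=> gf tw c2 Hab.
case: (leqP #|~: val X| 1) => [h1|h1]; first exact: small gf tw h1.
have cX : #|~: val X| = 2%N by apply/eqP; rewrite eqn_leq c2 h1.
have [a [b [aX bX ab]]] := card_gt1P h1.
apply: main_nc => //.
- by exists a; move: aX; rewrite inE.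
- move=> c cX'.
  have cC : c \in ~: val X by rewrite inE.
  have [c' c'X c'c] : exists2 c', c' \notin val X & c' != c.
    case: (eqVneq c a) => [ca|ca]; last by exists a; [move: aX; rewrite inE | rewrite eq_sym].
    by exists b; [move: bX; rewrite inE | rewrite ca eq_sym].
  exists c' => //; apply/negP => st.
  have := stab_notin st c'X.
  have c'C : c' \in ~: val X by rewrite inE.
  rewrite -in_setC => yC.
  have cc' : c != c' by rewrite eq_sym.
  case/orP: (two_elems cX c'C cC c'c yC).
    rewrite subr_eq -{1}(addr0 c') (inj_eq (addrI c')) eq_sym subr_eq0.
    by rewrite (negbTE cc').
  by rewrite H2; apply/negP; exact: Hab.
- move=> x /compl_lt; rewrite cX ltnS => h; exact: small gf tw h.
Qed.

Lemma compl_sub (G : finZmodType) (X : P0 G) (c e z : G) :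
  cosetb X -> c \notin val X -> e \in val X -> e != 0 ->
  z \notin val (addp (remP0 X e) (c - e)) -> (z == c) || (z == e).
Proof.
move=> cos cX eX e0; rewrite mem_addp !mem_rem // negb_or !negb_and !negbK.
case/andP => /orP [->|zX]; rewrite ?orbT //.
case/orP => [|zyX]; first by rewrite subr_eq addrC subrK => ->.
have := cosetP cos zX zyX; rewrite opprB addrC subrK => st.
by have := stab_notin st cX; rewrite opprB addrC subrK eX.
Qed.

Lemma compl_card (G : finZmodType) (X : P0 G) (c e : G) :
  cosetb X -> c \notin val X -> e \in val X -> e != 0 ->
  (#|~: val (addp (remP0 X e) (c - e)%R)| <= 2)%N.
Proof.
move=> cos cX eX e0.
apply: (leq_trans (subset_leq_card (_ : _ \subset [set c; e]))); last first.
  by rewrite cards2; case: (_ != _).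
by apply/subsetP => z; rewrite inE in_set2 => /(compl_sub cos cX eX e0).
Qed.

Lemma all_fixed (G : finZmodType) (f : P0 G -> P0 G) (w1 w2 : G) :
  good f -> two_w w1 w2 -> forall n (X : P0 G), (#|~: val X| <= n)%N -> f X = X.
Proof.
move=> gf tw; elim=> [|n IH] X hX; first by apply: small gf tw _; apply: leq_trans hX _.
case: (leqP #|~: val X| n) => [hn|hn]; first exact: IH.
case: (leqP #|~: val X| 1) => [h1|h1]; first exact: small gf tw h1.
have [c1 [c2 [c1X c2X c12]]] := card_gt1P h1.
rewrite !inE in c1X c2X.
case cos: (cosetb X).
- case: (leqP #|~: val X| 2) => [h2|h3].
  + have cX : #|~: val X| = 2%N by apply/eqP; rewrite eqn_leq h2 h1.
    have d0 : (c1 - c2) *+ 2 = 0.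
      have st := cosetP cos c1X c2X.
      have := stab_notin st c2X; rewrite -in_setC => yC.
      have c1C : c1 \in ~: val X by rewrite inE.
      have c2C : c2 \in ~: val X by rewrite inE.
      case/orP: (two_elems cX c1C c2C c12 yC); last first.
        rewrite subr_eq -{1}(addr0 c2) (inj_eq (addrI c2)) eq_sym subr_eq0.
        by rewrite (negbTE c12).
      by rewrite H2 => /eqP.
    have [w [w0 wa]] := pick_w c1 tw.
    set e := w + c1.
    have de : forall c, c \notin val X -> (c - e) *+ 2 != 0.
      move=> c cX'.
      have c1C : c1 \in ~: val X by rewrite inE.
      have c2C : c2 \in ~: val X by rewrite inE.
      have cC : c \in ~: val X by rewrite inE.
      have -> : c - e = (c - c1) - w by rewrite /e opprD addrA addrAC.
      rewrite mulrnBl.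
      have -> : (c - c1) *+ 2 = 0.
        case/orP: (two_elems cX c1C c2C c12 cC) => /eqP ->; first by rewrite subrr mul0rn.
        by rewrite -opprB mulNrn d0 oppr0.
      by rewrite sub0r oppr_eq0.
    have eX : e \in val X by apply/negPn/negP => /de; rewrite subrr mul0rn eqxx.
    apply: (coset_case gf cos c1X c2X c12 eX wa) => c cX'.
    apply: two_nc gf tw (compl_card cos cX' eX wa) _ => a b aX bX ab.
    have := compl_sub cos cX' eX wa aX; have := compl_sub cos cX' eX wa bX.
    move=> /orP [] /eqP Eb /orP [] /eqP Ea; rewrite Ea Eb ?eqxx in ab *; rewrite ?eqxx //.
      by rewrite -opprB mulNrn oppr_eq0; exact: de.
    exact: de.
  + have [e eX e0] : exists2 e, e \in val X & e != 0.
      apply/exists_inP; rewrite -[[exists _ in _, _]]negbK; apply/negP => /exists_inPn H.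
      have st := cosetP cos c1X c2X.
      have x0 : c1 - c2 != 0 by rewrite subr_eq0.
      have xX : c1 - c2 \notin val X by apply/negP => /H; rewrite x0.
      by have := stab_notin st xX; rewrite subrr (valP X).
    apply: (coset_case gf cos c1X c2X c12 eX e0) => c cX'.
    apply: IH; apply: leq_trans (compl_card cos cX' eX e0) _.
    by rewrite -ltnS; apply: leq_trans h3 hX.
- have [a [b [aX bX nab]]] : exists a, exists b, [/\ a \notin val X, b \notin val X & ~~ stabb X (a - b)].
    move/negbT: cos => /forallPn [a] /forallPn [b]; rewrite !negb_imply => /and3P [aX bX ns].
    by exists a, b.
  apply: main_nc => //; first by exists c1.
  + move=> c cX'; case: (boolP (stabb X (c - b))) => [sb|]; last by exists b.
    exists a => //; apply: contra nab => sa.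
    by have := stabB sb sa; rewrite opprB addrC addrA subrK.
  + move=> x /compl_lt h; apply: IH; rewrite -ltnS; exact: leq_trans h hX.
Qed.

Lemma two_w_iso (p : nat) (G : finZmodType) :
  prime p -> iso_C2_Cn G (2 * p) -> exists w1 w2 : G, two_w w1 w2.
Proof.
move=> pp [phi [[psi phiK psiK] hom]].
have inj := can_inj phiK.
have phi0 : phi 0 = 0.
  by apply: (addrI (phi 0)); rewrite -hom !addr0.
have p1 := prime_gt1 pp.
have two : (1 + 1 : 'Z_(2 * p)) != 0.
  rewrite -mulr2n; apply/eqP => /(congr1 val) /=.
  have h2 : (2 < 2 * p)%N by rewrite mul2n -addnn; apply: leq_trans (leq_add p1 p1).
  rewrite Zp_cast; last by apply: ltn_trans h2.
  by rewrite !modn_small //; apply: ltn_trans h2.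
have dbl : forall x, phi x *+ 2 != 0 -> True by [].
set a : 'Z_2 * 'Z_(2 * p) := (0, 1); set b : 'Z_2 * 'Z_(2 * p) := (1, 1).
have nz : forall x : 'Z_2 * 'Z_(2 * p), x.2 = 1 -> phi x *+ 2 != 0.
  move=> x x2; rewrite mulr2n -hom -phi0 (inj_eq inj).
  by apply: contra two => /eqP /(congr1 snd) /=; rewrite x2 => ->.
exists (phi a), (phi b); split; [|exact: nz|exact: nz].
by rewrite (inj_eq inj).
Qed.

Local Close Scope ring_scope.

Theorem lemma3p6 (p : nat) (G : finZmodType) (f : P0 G -> P0 G) :
  prime p -> iso_C2_Cn G (2 * p) ->
  P0_automorphism f -> trivial_pullback f ->
  forall A : P0 G, f A = A.
Proof.
move=> pp iso aut tp A.
have gf := good_of aut tp.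
have [w1 [w2 tw]] := two_w_iso pp iso.
exact: (all_fixed gf tw (leqnn _)).
Qed.
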